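(* Every object $(V,\mathsf b,\mathsf t)$ of $\mathcal E_0$ (equivalently, every fiber functor on $\mathbf{CrysTL}$) is isomorphic to an inflation $(V',\mathsf b',\mathsf t')\triangleright(\Bbbk^{\oplus 2m},\mathsf J_2^{\perp m},\mathsf t'')$ with $m>0$, where $(\Bbbk^{\oplus 2m},\mathsf J_2^{\perp m},\mathsf t'')\in\mathcal E_0$ (so $\mathsf t''\in\mathcal R(\mathsf J_2^{\perp m})\otimes\mathcal L(\mathsf J_2^{\perp m})$) and $(V',\mathsf b',\mathsf t')$ is a triple with $\mathsf t'\in\mathcal R(\mathsf b')\otimes\mathcal L(\mathsf b')$ and $\mathsf b'(\mathsf t')=0$.
   Context: $\Bbbk=\mathbb C$. For a bilinear form $\mathsf b$ on a finite-dimensional space $V$, $\mathcal L(\mathsf b)=\{v:\mathsf b(v,-)=0\}$ and $\mathcal R(\mathsf b)=\{v:\mathsf b(-,v)=0\}$, and $\mathsf b(\mathsf t)$ denotes $\mathsf b$ applied to $\mathsf t\in V\otimes V$ as a linear map $V\otimes V\to\Bbbk$. $\mathcal E_0$ is the category whose objects are triples $(V,\mathsf b,\mathsf t)$ with $V$ finite-dimensional, $\mathsf b$ bilinear on $V$, $\mathsf t\in\mathcal R(\mathsf b)\otimes\mathcal L(\mathsf b)$ and $\mathsf b(\mathsf t)=1$; morphisms $(V,\mathsf b,\mathsf t)\to(W,\mathsf c,\mathsf s)$ are linear maps $f$ with $\mathsf c(fv,fw)=\mathsf b(v,w)$ and $(f\otimes f)(\mathsf t)=\mathsf s$. (It is equivalent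 to the category of fiber functors — faithful exact $\Bbbk$-linear monoidal functors to $\mathbf{vec}$ — on the Cauchy completion $\mathbf{CrysTL}$ of the category $\mathcal{TL}_0(\Bbbk)$ generated by $\mathrm{cup}:\mathbf 0\to\mathbf 2$, $\mathrm{cap}:\mathbf 2\to\mathbf 0$ with both zig-zags $0$ and $\mathrm{cap}\circ\mathrm{cup}=\mathrm{id}_{\mathbf 0}$, via $U\mapsto(U(\mathbf 1),U(\mathrm{cap}),U(\mathrm{cup}))$.) Given $(V,\mathsf b,\mathsf t)\in\mathcal E_0$ and a triple $(V',\mathsf b',\mathsf t')$ with $\mathsf t'\in\mathcal R(\mathsf b')\otimes\mathcal L(\mathsf b')$ and $\mathsf b'(\mathsf t')=0$, the inflation is $(V',\mathsf b',\mathsf t')\triangleright(V,\mathsf b,\mathsf t)=(V'\oplus V,\mathsf b'\perp\mathsf b,\mathsf t+\mathsf t')\in\mathcal E_0$, where $\perp$ denotes orthogonal direct sum of forms. $\mathsf J_2$ is the bilinear form on $\Bbbk^2$ with matrix $\begin{pmatrix}0&1\\0&0\end{pmatrix}$, i.e. $\mathsf J_2(x,y)=x_1y_2$, and $\mathsf J_2^{\perp m}$ is the orthogonal sum of $m$ copies on $\Bbbk^{\oplus 2m}$. *)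

(* Defs.v *)
From HB Require Import structures.
From mathcomp Require Import all_boot all_algebra complex.
From mathcomp Require Import reals.
Set Implicit Arguments. Unset Strict Implicit. Unset Printing Implicit Defensive.
Import GRing.Theory.
Local Open Scope ring_scope.

(* Coordinates: a finite-dimensional space V is k^n with vectors 'rV_n.
   A bilinear form b is a matrix B : b(x,y) = x B y^T.
   A tensor t in V (x) V is a matrix T : t = \sum_{i,j} T i j e_i (x) e_j. *)
Section Defs.
Variable K : fieldType.

Definition bform n (B : 'M[K]_n) (x y : 'rV[K]_n) : K := (x *m B *m y^T) 0 0.

(* b(t) : b applied to t as a linear map V (x) V -> k *)
Definition bapp n (B T : 'M[K]_n) : K := \sum_(i < n) \sum_(j < n) T i j * B i j.

Definition inL n (B : 'M[K]_n) (v : 'rV[K]_n) := forall w, bform B v w = 0.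
Definition inR n (B : 'M[K]_n) (v : 'rV[K]_n) := forall w, bform B w v = 0.

Definition in_RL n (B T : 'M[K]_n) : Prop :=
  exists (k : nat) (U W : 'M[K]_(k, n)),
    T = U^T *m W /\ (forall i, inR B (row i U)) /\ (forall i, inL B (row i W)).

Definition isE0 n (B T : 'M[K]_n) : Prop := in_RL B T /\ bapp B T = 1.

(* morphisms of E_0: the linear map v |-> v *m F; (f (x) f)(t) = F^T T F *)
Definition isE0mor n p (B T : 'M[K]_n) (C S : 'M[K]_p) (F : 'M[K]_(n, p)) : Prop :=
  (forall v w, bform C (v *m F) (w *m F) = bform B v w) /\ F^T *m T *m F = S.

Definition isE0iso n p (B T : 'M[K]_n) (C S : 'M[K]_p) : Prop :=
  exists (F : 'M[K]_(n, p)) (G : 'M[K]_(p, n)),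
    isE0mor B T C S F /\ isE0mor C S B T G /\
    F *m G = 1%:M /\ G *m F = 1%:M.

Definition inflB n' n (B' : 'M[K]_n') (B : 'M[K]_n) : 'M[K]_(n' + n) :=
  block_mx B' 0 0 B.
Definition inflT n' n (T' : 'M[K]_n') (T : 'M[K]_n) : 'M[K]_(n' + n) :=
  block_mx T' 0 0 T.

(* J_2^{perp m} on k^{2m}: J(x,y) = \sum_l x_{2l} y_{2l+1} (0-based indices) *)
Definition Jperp m : 'M[K]_(2 * m) :=
  \matrix_(i, j) ((~~ odd i) && (j == i.+1 :> nat))%:R.

End Defs.

(* Main.v *)
Set Warnings "-notation-overridden,-ambiguous-paths".
Require Import Defs.
From mathcomp Require Import all_boot all_algebra complex.
From mathcomp Require Import reals.
From mathcomp Require Import zify ring.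
Set Implicit Arguments. Unset Strict Implicit. Unset Printing Implicit Defensive.
Import GRing.Theory.
Local Open Scope ring_scope.

Section Gen.
Variable K : fieldType.

Lemma bappE n (B T : 'M[K]_n) : bapp B T = \tr (T *m B^T).
Proof.
rewrite /bapp /mxtrace; apply: eq_bigr => i _; rewrite !mxE.
by apply: eq_bigr => j _; rewrite !mxE.
Qed.

Lemma rowrowE n p q (X : 'M[K]_(p, n)) (Y : 'M[K]_(q, n)) a i :
  (row a X *m (row i Y)^T) 0 0 = (X *m Y^T) a i.
Proof. by rewrite !mxE; apply: eq_bigr => j _; rewrite !mxE. Qed.

Lemma inR_mx n k (B : 'M[K]_n) (U : 'M[K]_(k, n)) :
  (forall i, inR B (row i U)) -> B *m U^T = 0.
Proof.
move=> h; apply/matrixP => a i; have hh : bform B (delta_mx 0 a) (row i U) = 0 by apply: h.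
rewrite [RHS]mxE -rowrowE [row a B]rowE; exact: hh.
Qed.

Lemma inL_mx n k (B : 'M[K]_n) (W : 'M[K]_(k, n)) :
  (forall i, inL B (row i W)) -> W *m B = 0.
Proof.
move=> h; apply/matrixP => i a.
have hh : bform B (row i W) (delta_mx 0 a) = 0 by apply: h.
move: hh; rewrite /bform -row_mul -row1 rowrowE trmx1 mulmx1 => ->.
by rewrite mxE.
Qed.

Lemma mx_inR n k (B : 'M[K]_n) (U : 'M[K]_(k, n)) :
  B *m U^T = 0 -> forall i, inR B (row i U).
Proof.
by move=> h i w; rewrite /bform rowE trmx_mul !mulmxA -(mulmxA w) h mulmx0 mul0mx mxE.
Qed.

Lemma mx_inL n k (B : 'M[K]_n) (W : 'M[K]_(k, n)) :
  W *m B = 0 -> forall i, inL B (row i W).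
Proof.
by move=> h i w; rewrite /bform rowE -(mulmxA _ W) h mulmx0 mul0mx mxE.
Qed.

Lemma idem_base n (P : 'M[K]_n) : P *m P = P ->
  row_base P *m col_base P = 1%:M.
Proof.
move=> PP.
have [L HL] : exists L, L *m col_base P = 1%:M by apply/row_fullP; exact: col_base_full.
have [Rr HR] : exists Rr, row_base P *m Rr = 1%:M by apply/row_freeP; exact: row_base_free.
rewrite -(mulmx_base P) in PP.
move: HL HR PP; move: (col_base P) (row_base P) => c r HL HR PP.
have : L *m (c *m r *m (c *m r)) *m Rr = L *m (c *m r) *m Rr by rewrite PP.
by rewrite !mulmxA HL mul1mx -!mulmxA HR mulmx1.
Qed.
End Gen.

Section PP.
Variable K : fieldType.
Variable m : nat.

Lemma sum_delta N (i0 : 'I_N) (g : 'I_N -> K) :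
  \sum_(i < N) (i == i0)%:R * g i = g i0.
Proof.
rewrite (bigD1 i0) //= eqxx mul1r big1 ?addr0 // => i /negbTE ->.
by rewrite mul0r.
Qed.

Lemma ev_proof (a : 'I_m) : (a.*2 < 2 * m)%N.
Proof. have := ltn_ord a; lia. Qed.
Lemma od_proof (a : 'I_m) : (a.*2.+1 < 2 * m)%N.
Proof. have := ltn_ord a; lia. Qed.
Lemma half_proof (i : 'I_(2 * m)) : (i./2 < m)%N.
Proof. rewrite ltn_half_double; have := ltn_ord i; lia. Qed.

Definition ev (a : 'I_m) : 'I_(2 * m) := Ordinal (ev_proof a).
Definition od (a : 'I_m) : 'I_(2 * m) := Ordinal (od_proof a).
Definition hf (i : 'I_(2 * m)) : 'I_m := Ordinal (half_proof i).

Definition Pe : 'M[K]_(m, 2 * m) := \matrix_(a, i) (i == ev a)%:R.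
Definition Po : 'M[K]_(m, 2 * m) := \matrix_(a, i) (i == od a)%:R.

Lemma ev_eq a b : (ev a == ev b) = (a == b).
Proof. rewrite -!val_eqE /=; apply/eqP/eqP; lia. Qed.
Lemma od_eq a b : (od a == od b) = (a == b).
Proof. rewrite -!val_eqE /=; apply/eqP/eqP; lia. Qed.
Lemma evod a b : (ev a == od b) = false.
Proof. rewrite -!val_eqE /=; apply/eqP; lia. Qed.
Lemma odev a b : (od a == ev b) = false.
Proof. rewrite -!val_eqE /=; apply/eqP; lia. Qed.

Lemma hf_ev (i : 'I_(2 * m)) : ~~ odd i -> i = ev (hf i).
Proof. move=> h; apply/val_inj => /=; rewrite even_halfK //. Qed.
Lemma hf_od (i : 'I_(2 * m)) : odd i -> i = od (hf i).
Proof. move=> h; apply/val_inj => /=; have := odd_double_half i; rewrite h; lia. Qed.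
Lemma odd_ev a : odd (ev a) = false.
Proof. by rewrite /= odd_double. Qed.
Lemma odd_od a : odd (od a) = true.
Proof. by rewrite /= odd_double. Qed.

Lemma PePe : Pe *m Pe^T = 1%:M.
Proof.
apply/matrixP => a b; rewrite !mxE.
under eq_bigr => i _ do rewrite !mxE.
by rewrite sum_delta ev_eq.
Qed.

Lemma PoPo : Po *m Po^T = 1%:M.
Proof.
apply/matrixP => a b; rewrite !mxE.
under eq_bigr => i _ do rewrite !mxE.
by rewrite sum_delta od_eq.
Qed.

Lemma PePo : Pe *m Po^T = 0.
Proof.
apply/matrixP => a b; rewrite !mxE.
under eq_bigr => i _ do rewrite !mxE.
by rewrite sum_delta evod.
Qed.

Lemma PoPe : Po *m Pe^T = 0.
Proof. by rewrite -[Po]trmxK -trmx_mul PePo trmx0. Qed.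

Lemma sum_zero (g : 'I_m -> K) (i : 'I_(2 * m)) (f : 'I_m -> 'I_(2 * m)) :
  (forall a, i != f a) -> \sum_a (i == f a)%:R * g a = 0.
Proof. by move=> h; rewrite big1 // => a _; rewrite (negbTE (h a)) mul0r. Qed.

Lemma sum_delta2 (g : 'I_m -> K) (a0 : 'I_m) (f : 'I_m -> 'I_(2 * m)) :
  (forall a b, (f a == f b) = (a == b)) ->
  \sum_a (f a0 == f a)%:R * g a = g a0.
Proof.
move=> h; rewrite -[RHS]sum_delta; apply: eq_bigr => a _.
by rewrite h eq_sym.
Qed.

Lemma PeoT : Pe^T *m Pe + Po^T *m Po = 1%:M.
Proof.
apply/matrixP => i j; rewrite !mxE.
under eq_bigr => a _ do rewrite !mxE.
under [X in _ + X = _]eq_bigr => a _ do rewrite !mxE.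
case: (boolP (odd i)) => oi.
  rewrite sum_zero; last by move=> a; rewrite (hf_od oi) odev.
rewrite {1 2}(hf_od oi) sum_delta2; last exact: od_eq.
  by rewrite add0r -(hf_od oi) eq_sym.
rewrite [X in _ + X]sum_zero; last by move=> a; rewrite (hf_ev oi) evod.
rewrite {1 2}(hf_ev oi) sum_delta2; last exact: ev_eq.
by rewrite addr0 -(hf_ev oi) eq_sym.
Qed.

Lemma JperpE : Jperp K m = Pe^T *m Po.
Proof.
apply/matrixP => i j; rewrite !mxE.
under eq_bigr => a _ do rewrite !mxE.
case: (boolP (odd i)) => oi /=.
  by rewrite sum_zero // => a; rewrite (hf_od oi) odev.
rewrite [in RHS](hf_ev oi) sum_delta2; last exact: ev_eq.
by rewrite -val_eqE /= even_halfK.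
Qed.

End PP.


Lemma mAE (K : fieldType) a b c d (X : 'M[K]_(a, b)) (A : 'M[K]_(b, c)) (Bm : 'M[K]_(c, d)) C :
  A *m Bm = C -> X *m A *m Bm = X *m C.
Proof. by move=> <-; rewrite mulmxA. Qed.

Lemma mAE3 (K : fieldType) a b c d e (X : 'M[K]_(a, b)) (A : 'M[K]_(b, c)) (Bm : 'M[K]_(c, d)) (Cm : 'M[K]_(d, e)) E :
  A *m Bm *m Cm = E -> X *m A *m Bm *m Cm = X *m E.
Proof. by move=> <-; rewrite !mulmxA. Qed.

Section Asm.
Variables (K : fieldType) (n m n' k0 : nat).
Variables (B T : 'M[K]_n) (Em Fm : 'M[K]_(m, n)) (N' : 'M[K]_m) (U0 W0 : 'M[K]_(k0, n)).
Variables (Pe Po : 'M[K]_(m, 2 * m)) (FH : 'M[K]_(n, 2 * m)) (H : 'M[K]_(2 * m, n)).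
Variables (D : 'M[K]_(n', n)) (FD : 'M[K]_(n, n')).
Hypotheses (hE : B *m Em^T = 0) (hF : Fm *m B = 0) (hEF : Em *m B *m Fm^T = 1%:M)
  (hT : T = Em^T *m N' *m Fm + U0^T *m W0) (hU0 : B *m U0^T = 0) (hW0 : W0 *m B = 0)
  (hx1 : U0 *m B *m Fm^T = 0) (hx2 : Em *m B *m W0^T = 0).
Hypotheses (PePe : Pe *m Pe^T = 1%:M) (PoPo : Po *m Po^T = 1%:M) (PePo : Pe *m Po^T = 0)
  (PoPe : Po *m Pe^T = 0) (PeoT : Pe^T *m Pe + Po^T *m Po = 1%:M).
Hypotheses (hFH : FH = B *m Fm^T *m Pe + B^T *m Em^T *m Po) (hH : H = Pe^T *m Em + Po^T *m Fm).
Hypotheses (DFD : D *m FD = 1%:M) (FDD : FD *m D = 1%:M - FH *m H).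

Lemma EmBT : Em *m B^T = 0.
Proof. by rewrite -[Em]trmxK -trmx_mul hE trmx0. Qed.
Lemma BTFmT : B^T *m Fm^T = 0.
Proof. by rewrite -trmx_mul hF trmx0. Qed.
Lemma U0BT : U0 *m B^T = 0.
Proof. by rewrite -[U0]trmxK -trmx_mul hU0 trmx0. Qed.
Lemma BTW0T : B^T *m W0^T = 0.
Proof. by rewrite -trmx_mul hW0 trmx0. Qed.
Lemma hFE : Fm *m B^T *m Em^T = 1%:M.
Proof. by rewrite -[Fm]trmxK -!trmx_mul mulmxA hEF trmx1. Qed.
Lemma hx2T : W0 *m B^T *m Em^T = 0.
Proof. by rewrite -[W0]trmxK -!trmx_mul mulmxA hx2 trmx0. Qed.

Lemma EmFH : Em *m FH = Pe.
Proof.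
by rewrite hFH mulmxDr !mulmxA hEF mul1mx EmBT !mul0mx addr0.
Qed.
Lemma FmFH : Fm *m FH = Po.
Proof.
by rewrite hFH mulmxDr !mulmxA hF hFE !mul0mx mul1mx add0r.
Qed.
Lemma U0FH : U0 *m FH = 0.
Proof.
by rewrite hFH mulmxDr !mulmxA hx1 U0BT !mul0mx addr0.
Qed.
Lemma W0FH : W0 *m FH = 0.
Proof.
by rewrite hFH mulmxDr !mulmxA hW0 hx2T !mul0mx addr0.
Qed.
Lemma HFH : H *m FH = 1%:M.
Proof. by rewrite hH mulmxDl -!mulmxA EmFH FmFH. Qed.
Lemma PeH : Pe *m H = Em.
Proof. by rewrite hH mulmxDr !mulmxA PePe PePo mul1mx mul0mx addr0. Qed.
Lemma PoH : Po *m H = Fm.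
Proof. by rewrite hH mulmxDr !mulmxA PoPe PoPo mul1mx mul0mx add0r. Qed.
Lemma DFH : D *m FH = 0.
Proof.
have -> : D = D *m (FD *m D) by rewrite mulmxA DFD mul1mx.
rewrite FDD -mulmxA mulmxBl mul1mx -mulmxA HFH mulmx1 subrr mulmx0 //.
Qed.
Lemma HFD : H *m FD = 0.
Proof.
have -> : FD = FD *m D *m FD by rewrite -mulmxA DFD mulmx1.
rewrite FDD mulmxA mulmxBr mulmx1 mulmxA HFH mul1mx subrr mul0mx //.
Qed.
Lemma EmFD : Em *m FD = 0.
Proof. by rewrite -PeH -mulmxA HFD mulmx0. Qed.
Lemma FmFD : Fm *m FD = 0.
Proof. by rewrite -PoH -mulmxA HFD mulmx0. Qed.
Lemma U0Pi : U0 *m (FD *m D) = U0.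
Proof. by rewrite FDD mulmxBr mulmx1 mulmxA U0FH mul0mx subr0. Qed.
Lemma W0Pi : W0 *m (FD *m D) = W0.
Proof. by rewrite FDD mulmxBr mulmx1 mulmxA W0FH mul0mx subr0. Qed.
Lemma BHT : B *m H^T = B *m Fm^T *m Po.
Proof.
by rewrite hH linearD /= !trmx_mul !trmxK mulmxDr !mulmxA hE mul0mx add0r.
Qed.
Lemma HB : H *m B = Pe^T *m Em *m B.
Proof. by rewrite hH mulmxDl -(mulmxA _ Fm) hF mulmx0 addr0. Qed.
Lemma HBHT : H *m B *m H^T = Pe^T *m Po.
Proof. by rewrite HB -!mulmxA BHT !mulmxA (mAE3 _ hEF) mulmx1. Qed.
Lemma FHPeT : FH *m Pe^T = B *m Fm^T.
Proof. by rewrite hFH mulmxDl -!mulmxA PePe PoPe mulmx1 !mulmx0 addr0. Qed.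
Lemma FHPoT : FH *m Po^T = B^T *m Em^T.
Proof. by rewrite hFH mulmxDl -!mulmxA PePo PoPo mulmx1 !mulmx0 add0r. Qed.
Lemma DPi : D *m (FD *m D) = D.
Proof. by rewrite mulmxA DFD mul1mx. Qed.
Lemma PiBFm : FD *m D *m B *m Fm^T = 0.
Proof.
rewrite FDD mulmxBl mul1mx mulmxBl -(mulmxA FH H) HB -!mulmxA (mulmxA Em) hEF mulmx1.
by rewrite FHPeT subrr.
Qed.
Lemma PiBTEm : FD *m D *m B^T *m Em^T = 0.
Proof.
rewrite FDD mulmxBl mul1mx mulmxBl -(mulmxA FH H) -mulmxA.
have -> : H *m B^T *m Em^T = Po^T.
  by rewrite hH !mulmxDl (mAE _ EmBT) (mAE3 _ hFE) mulmx0 mul0mx mulmx1 add0r.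
by rewrite FHPoT subrr.
Qed.
Lemma DBFm : D *m B *m Fm^T = 0.
Proof. by have h := congr1 (mulmx D) PiBFm; rewrite !mulmxA DFD mul1mx mulmx0 in h. Qed.
Lemma DBTEm : D *m B^T *m Em^T = 0.
Proof. by have h := congr1 (mulmx D) PiBTEm; rewrite !mulmxA DFD mul1mx mulmx0 in h. Qed.
Lemma DBHT : D *m B *m H^T = 0.
Proof. by rewrite -mulmxA BHT !mulmxA DBFm mul0mx. Qed.
Lemma HBDT : H *m B *m D^T = 0.
Proof.
rewrite HB -!mulmxA; have -> : Em *m (B *m D^T) = (D *m B^T *m Em^T)^T by rewrite !trmx_mul !trmxK mulmxA.
by rewrite DBTEm trmx0 mulmx0.
Qed.
Lemma W0Pi' : W0 *m FD *m D = W0.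
Proof. by rewrite -mulmxA W0Pi. Qed.
Lemma FDTEm : FD^T *m Em^T = 0.
Proof. by rewrite -trmx_mul EmFD trmx0. Qed.
Lemma FHTEm : FH^T *m Em^T = Pe^T.
Proof. by rewrite -trmx_mul EmFH. Qed.
Lemma FHTU0 : FH^T *m U0^T = 0.
Proof. by rewrite -trmx_mul U0FH trmx0. Qed.
Lemma Teq' : FD^T *m T *m FD = (U0 *m FD)^T *m (W0 *m FD).
Proof.
by rewrite hT mulmxDr !mulmxA FDTEm !mul0mx add0r trmx_mul.
Qed.
Lemma TFH : T *m FH = Em^T *m N' *m Po.
Proof. by rewrite hT mulmxDl -!mulmxA FmFH W0FH mulmx0 addr0. Qed.
Lemma FHTT : FH^T *m T = Pe^T *m N' *m Fm.
Proof. by rewrite hT mulmxDr !mulmxA FHTEm FHTU0 mul0mx addr0. Qed.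

Hypothesis hJ : Jperp K m = Pe^T *m Po.

Lemma asm_main (htr : \tr N' = 1) (htr0 : \tr (U0 *m B *m W0^T) = 0) :
  isE0 (Jperp K m) (Pe^T *m N' *m Po) /\ in_RL (D *m B *m D^T) (FD^T *m T *m FD) /\
  bapp (D *m B *m D^T) (FD^T *m T *m FD) = 0 /\
  isE0iso B T (inflB (D *m B *m D^T) (Jperp K m)) (inflT (FD^T *m T *m FD) (Pe^T *m N' *m Po)).
Proof.
split.
  split.
    exists m, Pe, (N' *m Po); split; first by rewrite mulmxA.
    split.
      by apply: mx_inR; rewrite hJ -mulmxA PoPe mulmx0.
    by apply: mx_inL; rewrite hJ -!mulmxA (mulmxA Po) PoPe mul0mx !mulmx0.
  rewrite bappE hJ trmx_mul trmxK !mulmxA -(mulmxA _ Po) PoPo mulmx1.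
  by rewrite -mulmxA mxtrace_mulC -mulmxA PePe mulmx1 htr.
split.
  exists k0, (U0 *m FD), (W0 *m FD); split; first exact: Teq'.
  split.
    apply: mx_inR; rewrite trmx_mul -!mulmxA (mulmxA D^T) -trmx_mul -trmx_mul U0Pi.
    by rewrite hU0 !mulmx0.
  by apply: mx_inL; rewrite !mulmxA W0Pi' hW0 !mul0mx.
split.
  rewrite bappE Teq' !trmx_mul !trmxK.
  have -> : FD^T *m U0^T *m (W0 *m FD) *m (D *m (B^T *m D^T))
      = FD^T *m (U0^T *m W0 *m B^T *m D^T).
    by rewrite !mulmxA (mAE3 _ W0Pi').
  rewrite mxtrace_mulC.
  have -> : U0^T *m W0 *m B^T *m D^T *m FD^T = U0^T *m (W0 *m B^T *m D^T *m FD^T).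
    by rewrite !mulmxA.
  rewrite mxtrace_mulC.
  have DFU : D^T *m FD^T *m U0^T = U0^T by rewrite -!trmx_mul U0Pi.
  have -> : W0 *m B^T *m D^T *m FD^T *m U0^T = W0 *m B^T *m U0^T.
    by rewrite -!mulmxA (mulmxA D^T) DFU.
  by rewrite -htr0 -mxtrace_tr !trmx_mul !trmxK mulmxA.
pose G := col_mx D H; pose F := row_mx FD FH.
have GBGT : G *m B *m G^T = inflB (D *m B *m D^T) (Jperp K m).
  by rewrite /G /inflB tr_col_mx mul_col_mx mul_col_row DBHT HBDT HBHT hJ.
have FTF : F^T *m T *m F = inflT (FD^T *m T *m FD) (Pe^T *m N' *m Po).
  rewrite /F /inflT tr_row_mx mul_col_mx mul_col_row.
  rewrite -(mulmxA FD^T T FH) TFH !mulmxA FDTEm !mul0mx FHTT -!mulmxA FmFD mulmx0 FmFH.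
  by rewrite mulmx0.
have FG : F *m G = 1%:M by rewrite mul_row_col FDD subrK.
have GF : G *m F = 1%:M.
  by rewrite mul_col_row DFD DFH HFD HFH -scalar_mx_block.
have FGT : G^T *m F^T = 1%:M by rewrite -trmx_mul FG trmx1.
exists F, G; split.
  split; last exact: FTF.
  move=> v w; rewrite /bform -GBGT trmx_mul !mulmxA (mAE _ FG) mulmx1.
  by rewrite (mAE _ FGT) mulmx1.
split.
  split; last by rewrite -FTF !mulmxA FGT mul1mx -mulmxA FG mulmx1.
  by move=> v w; rewrite /bform -GBGT trmx_mul !mulmxA.
by split.
Qed.
End Asm.


Section Fit.
Variables (F : fieldType) (k : nat) (M : 'M[F]_k.+1).
Local Notation hM := (horner_mx M).
Lemma fitting :
  exists (P Q : 'M[F]_k.+1) (a : nat),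
    [/\ P * P = P, M * P = P * M, M * Q = P, Q * P = P * Q & (M * (1 - P)) ^+ a = 0].
Proof.
pose p := 'X * char_poly M.
have p0 : p != 0.
  by rewrite mulf_neq0 ?polyX_eq0 // monic_neq0 // char_poly_monic.
case: (multiplicity_XsubC p 0) => a [q nq hp].
rewrite p0 /= in nq; rewrite polyC0 subr0 in hp.
have a0 : (0 < a)%N.
  case: a hp => // hp; move: nq; rewrite expr0 mulr1 in hp.
  by rewrite -hp /root /p hornerM hornerX mul0r eqxx.
have cop : coprimep ('X ^+ a) q.
  apply: coprimep_expl; rewrite coprimep_sym.
  by have := coprimep_XsubC q 0; rewrite polyC0 subr0 => ->.
case/Bezout_eq1_coprimepP: cop => -[u v] /= huv.
have hp0 : hM p = 0 by rewrite /p rmorphM /= Cayley_Hamilton mulr0.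
have hq0 : hM (q * 'X ^+ a) = 0 by rewrite -hp.
have comm : forall r s, hM r * hM s = hM s * hM r.
  by move=> r s; rewrite -!rmorphM /= mulrC.
have hMX : hM 'X = M by rewrite horner_mx_X.
exists (hM (u * 'X ^+ a)), (hM (u * 'X ^+ a.-1)), a; split.
- have e : hM (u * 'X ^+ a) * hM (v * q) = 0.
    rewrite -rmorphM /=.
    have -> : u * 'X ^+ a * (v * q) = u * v * (q * 'X ^+ a) by ring.
    by rewrite rmorphM /= hq0 mulr0.
  have e1 : hM (v * q) = 1 - hM (u * 'X ^+ a).
    by rewrite -(rmorph1 hM) -huv rmorphD /= addrC addKr.
  by move: e; rewrite e1 mulrBr mulr1 => /eqP; rewrite subr_eq0 => /eqP.
- by have := comm 'X (u * 'X ^+ a); rewrite hMX.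
- rewrite -{1}hMX -rmorphM /=; congr (hM _).
  by rewrite -[in RHS](prednK a0) exprS; ring.
- exact: comm.
have e1 : 1 - hM (u * 'X ^+ a) = hM (v * q).
  by rewrite -(rmorph1 hM) -huv rmorphD /= addrAC subrr add0r.
rewrite e1 -{1}hMX -rmorphM -rmorphXn /=.
have qa : q ^+ a = q * q ^+ a.-1 by rewrite -exprS prednK.
have -> : ('X * (v * q)) ^+ a = (q * 'X ^+ a) * (v ^+ a * q ^+ a.-1).
  by rewrite !exprMn qa; ring.
by rewrite rmorphM /= hq0 mul0r.
Qed.
End Fit.

Lemma prod_X0 (C : fieldType) (s : seq C) : (forall z, z \in s -> z = 0) ->
  \prod_(z <- s) ('X - z%:P) = 'X ^+ (size s).
Proof.
elim: s => [|z s IH] h; first by rewrite big_nil expr0.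
rewrite big_cons (h z (mem_head _ _)) polyC0 subr0 IH ?exprS // => y ys.
by apply: h; rewrite in_cons ys orbT.
Qed.

Lemma nil_trace (C : closedFieldType) k (N : 'M[C]_k.+1) a : N ^+ a = 0 -> \tr N = 0.
Proof.
move=> Na.
have ev0 : forall z, root (char_poly N) z -> z = 0.
  move=> z; rewrite -eigenvalue_root_char => /eigenvalueP [v hv v0].
  have pw : forall j, v *m N ^+ j = z ^+ j *: v.
    elim=> [|j IH]; first by rewrite expr0 mulmx1 scale1r.
    by rewrite exprSr -mulmxE mulmxA IH -scalemxAl hv scalerA -exprSr.
  have := pw a; rewrite Na mulmx0 => /esym /eqP.
  rewrite scaler_eq0 (negbTE v0) orbF expf_eq0 => /andP[_ /eqP //].
have [rs hrs] := closed_field_poly_normal (char_poly N).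
rewrite (monicP (char_poly_monic N)) scale1r in hrs.
have hX : char_poly N = 'X ^+ (size rs).
  rewrite hrs prod_X0 // => z zin; apply: ev0.
  by rewrite hrs root_prod_XsubC.
have sz : size rs = k.+1.
  by have := size_char_poly N; rewrite hX size_polyXn => -[].
have := char_poly_trace N (ltn0Sn k).
rewrite hX sz coefXn /= eqn_leq ltnn andbF /= => /eqP; rewrite eq_sym oppr_eq0 => /eqP //.
Qed.


Lemma klevel (C : closedFieldType) n k (B T : 'M[C]_n) (U W : 'M[C]_(k.+1, n)) :
  B *m U^T = 0 -> W *m B = 0 -> T = U^T *m W -> \tr (U *m B *m W^T) = 1 ->
  exists m k0 (Em Fm : 'M[C]_(m, n)) (N' : 'M[C]_m) (U0 W0 : 'M[C]_(k0, n)),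
   [/\ (0 < m)%N, Em *m B *m Fm^T = 1%:M, T = Em^T *m N' *m Fm + U0^T *m W0,
       B *m Em^T = 0 & Fm *m B = 0] /\
   [/\ B *m U0^T = 0, W0 *m B = 0, U0 *m B *m Fm^T = 0 & Em *m B *m W0^T = 0] /\
   \tr N' = 1 /\ \tr (U0 *m B *m W0^T) = 0.
Proof.
move=> hU hW hT htr.
have [M eM] : exists M, U *m B *m W^T = M by eexists.
rewrite eM in htr.
have [P [Q [a [PP MP MQ QP nil]]]] := fitting M.
have PP' : (1 - P) * (1 - P) = 1 - P.
  by rewrite mulrBr mulr1 mulrBl mul1r PP subrr subr0.
have rc := idem_base PP; have cr := mulmx_base P.
have rc0 := idem_base PP'; have cr0 := mulmx_base (1 - P).
have trnil : \tr (M * (1 - P)) = 0 := nil_trace nil.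
have trMP : \tr (M *m P) = 1.
  move: trnil; rewrite mulrBr mulr1 raddfB /= htr => /eqP; rewrite subr_eq0 => /eqP.
  by rewrite mulmxE.
have E1 : (1 - P) *m M *m P = 0.
  by rewrite !mulmxE mulrBl mul1r mulrBl -MP -mulrA PP subrr.
have E2 : P *m M *m (1 - P) = 0.
  by rewrite !mulmxE -MP mulrBr mulr1 -mulrA PP subrr.
have MPQ : M *m P *m Q = P by rewrite !mulmxE -mulrA -QP mulrA MQ PP.
move: rc cr rc0 cr0; move: (\rank P) (row_base P) (col_base P) => m r c rc cr.
move: (\rank (1 - P)) (row_base (1 - P)) (col_base (1 - P)) => k0 r0 c0 rc0 cr0.
have m0 : (0 < m)%N.
  case: m r c rc cr => // r c rc cr.
  by move: trMP; rewrite -cr [c]thinmx0 mul0mx mulmx0 mxtrace0 => /eqP; rewrite eq_sym oner_eq0.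
have r0P : r0 *m (1 - P) = r0 by rewrite -cr0 mulmxA rc0 mul1mx.
have Pc : P *m c = c by rewrite -cr -mulmxA rc mulmx1.
have rP : r *m P = r by rewrite -cr mulmxA rc mul1mx.
have P0c0 : (1 - P) *m c0 = c0 by rewrite -cr0 -mulmxA rc0 mulmx1.
have r0Mc : r0 *m M *m c = 0.
  have -> : r0 *m M *m c = r0 *m ((1 - P) *m M *m P) *m c.
    by rewrite !mulmxA r0P -(mulmxA _ P c) Pc.
  by rewrite E1 mulmx0 mul0mx.
have rMc0 : r *m M *m c0 = 0.
  have -> : r *m M *m c0 = r *m (P *m M *m (1 - P)) *m c0.
    by rewrite !mulmxA rP -(mulmxA _ (1 - P) c0) P0c0.
  by rewrite E2 mulmx0 mul0mx.
have [N0 eN0] : exists N0, r *m M *m c = N0 by eexists.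
have hN0 : N0 *m (r *m Q *m c) = 1%:M.
  have -> : N0 *m (r *m Q *m c) = r *m (M *m (c *m r) *m Q) *m c.
    by rewrite -eN0 !mulmxA.
  by rewrite cr MPQ rP rc.
have [N0u _] := mulmx1_unit hN0.
have trN0 : \tr N0 = 1.
  by rewrite -eN0 -mulmxA mxtrace_mulC -mulmxA cr.
have trN1 : \tr (r0 *m M *m c0) = 0.
  by rewrite -mulmxA mxtrace_mulC -mulmxA cr0 mulmxE.
exists m, k0, (r *m U), ((invmx N0)^T *m c^T *m W), N0^T, (r0 *m U), (c0^T *m W).
have eU : forall X : 'M[C]_(_, k.+1), X *m U *m B *m W^T = X *m M.
  by move=> ? X; rewrite -eM !mulmxA.
split; [split => // | split; [split | split => //]].
- by rewrite !trmx_mul !trmxK !mulmxA eU eN0 mulmxV.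
- rewrite !trmx_mul !mulmxA -(mulmxA _ N0^T) -(trmx_mul (invmx N0) N0) mulVmx // trmx1 mulmx1.
  have -> : U^T *m r^T *m c^T *m W + U^T *m r0^T *m c0^T *m W
      = U^T *m (c *m r + c0 *m r0)^T *m W.
    by rewrite linearD /= !trmx_mul mulmxDr mulmxDl !mulmxA.
  by rewrite cr cr0 addrC subrK trmx1 mulmx1.
- by rewrite trmx_mul mulmxA hU mul0mx.
- by rewrite -!mulmxA hW !mulmx0.
- by rewrite trmx_mul mulmxA hU mul0mx.
- by rewrite -!mulmxA hW !mulmx0.
- by rewrite !trmx_mul !trmxK !mulmxA eU r0Mc !mul0mx.
- by rewrite trmx_mul trmxK !mulmxA eU rMc0.
- by rewrite mxtrace_tr.
- by rewrite trmx_mul trmxK !mulmxA eU.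
Qed.

Unset Implicit Arguments.
Theorem mainTheorem19 (R : realType) (n : nat) (B T : 'M[R[i]]_n) :
  isE0 B T ->
  exists (n' m : nat) (B' T' : 'M[R[i]]_n') (T'' : 'M[R[i]]_(2 * m)),
    (0 < m)%N /\
    isE0 (Jperp _ m) T'' /\
    in_RL B' T' /\ bapp B' T' = 0 /\
    isE0iso B T (inflB B' (Jperp _ m)) (inflT T' T'').
Proof.
case=> [[k [U [W [hT [hR hL]]]]] hb].
have hU := inR_mx hR; have hW := inL_mx hL.
case: k U W hT hR hL hU hW => [|k] U W hT _ _ hU hW.
  move: hb; rewrite bappE hT [U]flatmx0 trmx0 !mul0mx mxtrace0 => /eqP.
  by rewrite eq_sym oner_eq0.
have htr : \tr (U *m B *m W^T) = 1.
  by rewrite -hb bappE hT -mulmxA mxtrace_mulC -mxtrace_tr !trmx_mul !trmxK mulmxA.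
have [m [k0 [Em [Fm [N' [U0 [W0 [[m0 hEF hT' hE hF] [[hU0 hW0 hx1 hx2] [htrN htr0]]]]]]]]]]
  := klevel hU hW hT htr.
pose FH := B *m Fm^T *m Pe _ m + B^T *m Em^T *m Po _ m.
pose H := (Pe _ m)^T *m Em + (Po _ m)^T *m Fm.
have HF : H *m FH = 1%:M := HFH hE hF hEF (PeoT _ m) (erefl FH) (erefl H).
have PiPi : (1%:M - FH *m H) *m (1%:M - FH *m H) = 1%:M - FH *m H.
  by rewrite mulmxBr mulmx1 mulmxBl mul1mx -mulmxA (mulmxA H) HF mul1mx subrr subr0.
have DFD := idem_base PiPi.
have FDD := mulmx_base (1%:M - FH *m H).
have [h1 [h2 [h3 h4]]] := asm_main hE hF hEF hT' hU0 hW0 hx1 hx2 (PePe _ m) (PoPo _ m)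
   (PePo _ m) (PoPe _ m) (PeoT _ m) (erefl FH) (erefl H) DFD FDD (JperpE _ m) htrN htr0.
by exists (\rank (1%:M - FH *m H)), m; do 3 eexists; split; [exact: m0 | split; [exact: h1|split; [exact: h2 | split; [exact: h3 | exact: h4]]]].
Qed.
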